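(* The tenth order mock theta function $\psi_{10}(q)=\sum_{n\ge0}\frac{q^{\binom{n+1}2}}{(q;q^2)_n}$ is the generating function $\sum_\pi q^{|\pi|}$ over partitions $\pi$ with $n$ copies of $n$ (including the empty one) in which, with parts in ascending lexicographic order, the weighted difference between each part and the preceding one is exactly $-1$, and the smallest part is of the form $j_j$.
   Context: $M=\{m_i: 1\le i\le m\}$; a partition with $n$ copies of $n$ is a finite multiset of elements of $M$, $|\pi|$ the sum of values. Lexicographic order: $m_i>n_j$ iff $m>n$, or $m=n$ and $i>j$. Weighted difference $((m_i-n_j))=m-n-i-j$. $(a;q)_n=\prod_{j=0}^{n-1}(1-aq^j)$. *)

(* Defs.v *)
From mathcomp Require Import all_boot all_order all_algebra.
Set Implicit Arguments. Unset Strict Implicit. Unset Printing Implicit Defensive.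
Import Order.TTheory GRing.Theory Num.Theory.

(* A part m_i of a partition with n copies of n is the pair (m, i), 1 <= i <= m. *)
Definition part := (nat * nat)%type.

Definition is_part (a : part) : bool := (0 < a.2) && (a.2 <= a.1).

Definition lexle (a b : part) : bool :=
  (a.1 < b.1) || ((a.1 == b.1) && (a.2 <= b.2)).

Definition wdiff (a b : part) : int :=
  (a.1%:Z - b.1%:Z - a.2%:Z - b.2%:Z)%R.

(* A partition with n copies of n (a finite multiset of parts) is represented
   canonically by the list of its parts in ascending lexicographic order. *)
Definition ncopy_partition (p : seq part) : bool :=
  all is_part p && sorted lexle p.

Definition weight (p : seq part) : nat := \sum_(a <- p) a.1.

Fixpoint consec_wdiff_m1 (p : seq part) : bool :=
  match p with
  | a :: ((b :: _) as t) => (wdiff b a == (-1)%R) && consec_wdiff_m1 t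
  | _ => true
  end.

Definition smallest_diag (p : seq part) : bool :=
  match p with
  | a :: _ => a.1 == a.2
  | [::] => true
  end.

Definition psi10_partition (p : seq part) : bool :=
  [&& ncopy_partition p, consec_wdiff_m1 p & smallest_diag p].

(* psi_10(q) = sum_{n>=0} q^{C(n+1,2)} / (q;q^2)_n, with
   1/(q;q^2)_n = prod_{j<n} 1/(1 - q^{2j+1}) = prod_{j<n} sum_{k>=0} q^{(2j+1)k}.
   psi10_trunc N is a polynomial agreeing with psi_10 in all coefficients of
   degree <= N (terms with n > N or k > N only contribute degrees > N). *)
Definition psi10_trunc (N : nat) : {poly int} :=
  (\sum_(n < N.+1)
     'X^('C(n.+1, 2)) * \prod_(j < n) \sum_(k < N.+1) 'X^((2 * j + 1) * k))%R.

Definition psi10_coeff (N : nat) : int := (psi10_trunc N)`_N.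

(* Main.v *)
Require Import Defs.
From mathcomp Require Import all_boot all_order all_algebra zify.
Import Order.TTheory GRing.Theory Num.Theory.

Fixpoint wsum (s : seq nat) : nat :=
  if s is d :: t then (d * (2 * size t + 1) + wsum t)%N else 0%N.

Fixpoint build_from (prev : part) (ds : seq nat) : seq part :=
  if ds is d :: t then
    let a := ((prev.1 + prev.2 + d)%N, d.+1) in a :: build_from a t
  else [::].

Definition build (ds : seq nat) : seq part :=
  if ds is d :: t then (d.+1, d.+1) :: build_from (d.+1, d.+1) t else [::].

Lemma build_from_ok prev ds : is_part prev ->
  [&& path lexle prev (build_from prev ds),
      consec_wdiff_m1 (prev :: build_from prev ds) &
      all is_part (build_from prev ds)].
Proof.
elim: ds prev => [|d ds IH] [m c] /=; first by [].
rewrite /is_part /= => /andP[c0 cm].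
have hp : is_part (m + c + d, d.+1)%N by rewrite /is_part /=; lia.
have /and3P[h1 h2 h3] := IH _ hp.
rewrite h1 h3 /=.
have -> : lexle (m, c) (m + c + d, d.+1)%N.
  by rewrite /lexle /=; apply/orP; left; lia.
have -> : wdiff (m + c + d, d.+1)%N (m, c) == (-1)%R.
  rewrite /wdiff /=; apply/eqP; lia.
move: h2; rewrite /= => ->; rewrite /=; lia.
Qed.

Lemma build_ok ds : psi10_partition (build ds).
Proof.
case: ds => [|d ds] //=.
have hp : is_part (d.+1, d.+1) by rewrite /is_part /= leqnn.
have /and3P[h1 h2 h3] := @build_from_ok _ ds hp.
rewrite /psi10_partition /ncopy_partition /= hp h1 h3 /= eqxx andbT.
by [].
Qed.

Lemma weight_cons a p : weight (a :: p) = (a.1 + weight p)%N.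
Proof. by rewrite /weight big_cons. Qed.

Lemma weight_build_from prev ds :
  weight (build_from prev ds) =
  (size ds * (prev.1 + prev.2) + 'C(size ds, 2) + wsum ds)%N.
Proof.
elim: ds prev => [|d ds IH] [m c] /=; first by rewrite /weight big_nil.
rewrite weight_cons IH /= binS bin1. nia.
Qed.

Lemma weight_build ds : weight (build ds) = ('C((size ds).+1, 2) + wsum ds)%N.
Proof.
case: ds => [|d ds] /=; first by rewrite /weight big_nil.
rewrite weight_cons weight_build_from /= !binS bin1. rewrite bin0; nia.
Qed.

Lemma build_from_inv prev p : all is_part p -> consec_wdiff_m1 (prev :: p) ->
  build_from prev (map (fun a => a.2.-1) p) = p.
Proof.
elim: p prev => [|a p IH] prev //= /andP[ha hp] /andP[hw hc].
have ea : ((prev.1 + prev.2 + a.2.-1)%N, a.2.-1.+1) = a.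
  move: ha hw; case: a {hc} => m i; case: prev => m0 i0.
  rewrite /is_part /wdiff /= => /andP[h1 h2] /eqP hw.
  congr (_, _) ; lia.
by rewrite ea IH.
Qed.

Lemma build_inv p : psi10_partition p -> build (map (fun a => a.2.-1) p) = p.
Proof.
case: p => [|a p] //=.
rewrite /psi10_partition /ncopy_partition /= => /and3P[/andP[/andP[ha hp] _] hc hd].
have ea : (a.2.-1.+1, a.2.-1.+1) = a.
  move: ha hd; case: a {hc} => m i; rewrite /is_part /= => /andP[h1 h2] /eqP h3.
  congr (_,_); lia.
by rewrite ea build_from_inv.
Qed.

Fixpoint enum_seqs (n B : nat) : seq (seq nat) :=
  if n is n'.+1 then [seq k :: s | k <- iota 0 B, s <- enum_seqs n' B]
  else [:: [::]].

Lemma mem_enum_seqs n B s :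
  (s \in enum_seqs n B) = (size s == n) && all (fun k => k < B) s.
Proof.
elim: n s => [|n IH] [|k s] //=.
- by apply/negbTE/allpairsPdep => -[x [y [_ _]]].
- apply/allpairsPdep/idP.
    case=> x [y [hx hy [-> ->]]].
    move: hy; rewrite IH => /andP[/eqP -> ->]; rewrite mem_iota in hx.
    rewrite eqxx andbT /=; lia.
  rewrite eqSS => /and3P[h1 h2 h3]; exists k, s; split => //.
    by rewrite mem_iota; lia.
  by rewrite IH h1.
Qed.

Lemma uniq_enum_seqs n B : uniq (enum_seqs n B).
Proof.
elim: n => [|n IH] //=.
apply: allpairs_uniq => //; first exact: iota_uniq.
by move=> [x1 y1] [x2 y2] _ _ /= [-> ->].
Qed.

Local Open Scope ring_scope.

Lemma prod_enumS n B :
  \prod_(j < n) \sum_(k < B) 'X^((2 * j + 1) * k) =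
  \sum_(s <- enum_seqs n B) ('X^(wsum s) : {poly int}).
Proof.
elim: n => [|n IH].
  by rewrite big_ord0 /= big_cons big_nil addr0 expr0.
rewrite big_ord_recr /= IH /= big_allpairs_dep /= mulr_suml.
rewrite -(big_mkord xpredT (fun k => 'X^((2 * n + 1) * k))) /index_iota subn0.
rewrite (eq_bigr (fun i => \sum_(k <- iota 0 B) 'X^(wsum i) * 'X^((2*n+1)*k))); last by move=> i _; rewrite mulr_sumr.
rewrite exchange_big /=.
apply: eq_bigr => k _.
rewrite big_seq [RHS]big_seq.
apply: eq_bigr => s; rewrite mem_enum_seqs => /andP[/eqP hs _].
by rewrite -exprD hs mulnC addnC.
Qed.

Lemma coef_sumX (L : seq (seq nat)) (e : seq nat -> nat) M :
  (\sum_(s <- L) ('X^(e s) : {poly int}))`_M = Posz (count (fun s => e s == M)%N L).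
Proof.
rewrite coef_sum; elim: L => [|x L IH]; first by rewrite big_nil.
rewrite big_cons IH coefXn /= eq_sym; case: (e x == M)%N => //=.
Qed.
Local Close Scope ring_scope.

Definition allS N := [seq s | n <- iota 0 N.+1, s <- enum_seqs n N.+1].
Definition Pw N (s : seq nat) : bool := ('C((size s).+1, 2) + wsum s == N)%N.

Local Open Scope ring_scope.
Lemma coeff_count N : psi10_coeff N = Posz (count (Pw N) (allS N)).
Proof.
rewrite /psi10_coeff /psi10_trunc /allS.
rewrite (eq_bigr (fun n : 'I_N.+1 => \sum_(s <- enum_seqs n N.+1)
            ('X^('C((size s).+1, 2) + wsum s) : {poly int}))); last first.
  move=> n _; rewrite prod_enumS mulr_sumr big_seq [RHS]big_seq.
  apply: eq_bigr => s; rewrite mem_enum_seqs => /andP[/eqP hs _].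
  by rewrite hs exprD.
rewrite -(big_mkord xpredT (fun n => \sum_(s <- enum_seqs n N.+1)
            ('X^('C((size s).+1, 2) + wsum s) : {poly int}))) /index_iota subn0.
have E := big_allpairs_dep (op := +%R) (idx := 0%R : {poly int})
  (h := fun (n : nat) (s : seq nat) => s) (r1 := iota 0 N.+1) (r2 := fun n => enum_seqs n N.+1)
  (F := fun s => 'X^('C((size s).+1, 2) + wsum s)).
rewrite -E.
rewrite coef_sumX; congr Posz; apply: eq_count => s; rewrite /Pw.
Qed.

Local Close Scope ring_scope.
Lemma build_from_snd prev ds : map (fun a => a.2.-1) (build_from prev ds) = ds.
Proof. by elim: ds prev => [|d ds IH] prev //=; rewrite IH. Qed.

Lemma build_snd ds : map (fun a => a.2.-1) (build ds) = ds.
Proof. by case: ds => [|d ds] //=; rewrite build_from_snd. Qed.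

Lemma uniq_allS N : uniq (allS N).
Proof.
apply: allpairs_uniq_dep; first exact: iota_uniq.
  by move=> x _; exact: uniq_enum_seqs.
move=> p1 p2 /allpairsPdep [x1 [y1 [_ h1 ->]]] /allpairsPdep [x2 [y2 [_ h2 ->]]] /= e.
move: h1 h2; rewrite !mem_enum_seqs => /andP[/eqP s1 _] /andP[/eqP s2 _].
by subst.
Qed.

Lemma weight_bounds p : all is_part p ->
  size p <= weight p /\ all (fun a => a.2 <= weight p) p.
Proof.
elim: p => [|a p IH] //= /andP[ha hp].
have [h1 h2] := IH hp.
rewrite weight_cons; move: ha; rewrite /is_part => /andP[a0 a1].
split; first lia.
apply/andP; split; first lia.
by apply: sub_all h2 => b /=; lia.
Qed.

Theorem theorem26 (N : nat) :
  exists s : seq (seq part),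
    [/\ uniq s,
        (forall p : seq part, p \in s = psi10_partition p && (weight p == N))
      & psi10_coeff N = Posz (size s)].
Proof.
exists [seq build x | x <- allS N & Pw N x]; split.
- rewrite map_inj_in_uniq; first by rewrite filter_uniq // uniq_allS.
  move=> x y _ _ e.
  by rewrite -(build_snd x) -(build_snd y) e.
- move=> p; apply/mapP/idP.
    case=> x; rewrite mem_filter => /andP[hP _] ->.
    by rewrite build_ok weight_build.
  case/andP=> hp /eqP hw.
  exists (map (fun a => a.2.-1) p); last by rewrite build_inv.
  rewrite mem_filter; apply/andP; split.
    by rewrite /Pw -hw -{3}(@build_inv p hp) weight_build size_map.
  have hpart : all is_part p by move: hp => /and3P[/andP[]].
  have [hs ha] := @weight_bounds p hpart.
  apply/allpairsPdep; exists (size p), (map (fun a => a.2.-1) p); split => //.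
    by rewrite mem_iota; lia.
  rewrite mem_enum_seqs size_map eqxx /= all_map.
  by apply: sub_all ha => a /=; lia.
- by rewrite coeff_count size_map size_filter.
Qed.
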